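(* Let $A',B'$ be subspaces of a finite-dimensional Hilbert space $\mathcal{H}$, with orthogonal projectors $\Pi_{A'},\Pi_{B'}$, and let $0\le\epsilon<1$. Then there exists a (possibly zero) subspace $A\subseteq A'$ with the following properties. (a) For all $v\in A$, $\|\Pi_{B'}v\|_2^2\ge(1-\sqrt{\epsilon})\|v\|_2^2$. (b) Letting $B\subseteq B'$ be the subspace spanned by the vectors $\Pi_{B'}v$, $v\in A$, and $\Pi_B$ its orthogonal projector, $\Pi_B\le(1-\sqrt{\epsilon})^{-1}\Pi_{B'}\Pi_{A'}\Pi_{B'}$ (in the positive semidefinite order). (c) If $\rho$ is any positive operator with $\operatorname{Tr}\rho\le 1$, support contained in $A'$, and $\operatorname{Tr}[\rho\Pi_{B'}]\ge1-\epsilon$, then $A$ is nonzero and $\operatorname{Tr}[\rho\,\Pi_B]\ge1-2\sqrt{\epsilon}$. *)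

(* Defs.v *)
(* Finite-dimensional Hilbert space = C^n with the standard
   inner product, C any numClosedFieldType (e.g. the complex numbers).
   Convention: vectors are ROW vectors 'rV[C]_n, an operator is represented by
   the matrix M acting as v |-> v *m M; subspaces are row spaces of matrices
   (mxalgebra, %MS). *)
From HB Require Import structures.
From mathcomp Require Import all_boot all_order all_algebra.
Set Implicit Arguments. Unset Strict Implicit. Unset Printing Implicit Defensive.
Import Order.TTheory GRing.Theory Num.Theory.
Local Open Scope ring_scope.

Definition adjmx (C : numClosedFieldType) (m n : nat) (M : 'M[C]_(m, n)) :
  'M[C]_(n, m) := (map_mx Num.conj M)^T.

Definition nrm2 (C : numClosedFieldType) (n : nat) (v : 'rV[C]_n) : C :=
  (v *m adjmx v) 0 0.

Definition hermitian (C : numClosedFieldType) (n : nat) (M : 'M[C]_n) : Prop :=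
  adjmx M = M.

Definition psd (C : numClosedFieldType) (n : nat) (M : 'M[C]_n) : Prop :=
  hermitian M /\ forall v : 'rV[C]_n, 0 <= (v *m M *m adjmx v) 0 0.

Definition loewner_le (C : numClosedFieldType) (n : nat) (M N : 'M[C]_n) : Prop :=
  psd (N - M).

Definition is_orth_proj (C : numClosedFieldType) (n m : nat)
    (P : 'M[C]_n) (U : 'M[C]_(m, n)) : Prop :=
  [/\ hermitian P, P *m P = P & (P == U)%MS].

(* Main.v *)
Require Import Defs.
From HB Require Import structures.
From mathcomp Require Import all_boot all_order all_algebra.
From mathcomp Require Import ring.
Import Order.TTheory GRing.Theory Num.Theory.
Local Open Scope ring_scope.

Module Helpers.
Set Implicit Arguments. Unset Strict Implicit. Unset Printing Implicit Defensive.

Lemma scalar_ineq (C : numFieldType) (I : finType) (r d : I -> C) (t : C) :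
  0 <= t -> t < 1 -> (forall i, 0 <= r i) -> (forall i, d i <= 1) ->
  (forall i, d i \is Num.real) -> \sum_i r i <= 1 -> 1 - t ^+ 2 <= \sum_i r i * d i ->
  1 - t <= \sum_i r i * (((1 - t <= d i)%R)%:R * d i).
Proof.
move=> t0 t1 r0 d1 dr sr1 srd.
set c := 1 - t.
have c0 : 0 < c by rewrite subr_gt0.
have cr : c \is Num.real by apply: gtr0_real.
have Y0 : \sum_i (1 - d i) * r i <= t ^+ 2.
  under eq_bigr => i _ do rewrite mulrBl mul1r mulrC.
  rewrite sumrB (_ : t ^+ 2 = 1 - (1 - t ^+ 2)); last by ring.
  exact: lerB.
have Ynn i : 0 <= (1 - d i) * r i by rewrite mulr_ge0 // subr_ge0.
have split : \sum_i r i * (((c <= d i)%R)%:R * d i) =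
   \sum_i r i * d i - \sum_i (1 - ((c <= d i)%R)%:R) * d i * r i.
  rewrite -sumrB; apply: eq_bigr => i _.
  by ring.
move: t0; rewrite le_eqVlt => /orP [/eqP t0|tp'].
- move: split; rewrite /c -t0 subr0 => ->.
  have Y : forall i, (1 - d i) * r i = 0.
    move=> i; apply: (@psumr_eq0P _ _ predT (fun i => (1 - d i) * r i)) => //; apply/eqP; rewrite eq_le; apply/andP; split.
      by move: Y0; rewrite -t0 expr0n /=.
    by apply: sumr_ge0.
  rewrite [X in _ - X]big1 ?subr0.
    by apply: le_trans srd; rewrite -t0 expr0n /= subr0.
  move=> i _; case h: (1 <= d i); rewrite /= ?subrr ?mul0r //.
  have : d i < 1 by rewrite real_ltNge ?h.
  move=> dlt; have /eqP := Y i; rewrite mulf_eq0 subr_eq0 (gt_eqF dlt) /= => /eqP->.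
  by rewrite subr0 mul1r mulr0.
- have key i : t * ((1 - ((c <= d i)%R)%:R) * d i * r i) <= c * ((1 - d i) * r i).
    case h: (c <= d i); rewrite /= ?subrr ?mul0r ?mulr0.
      by apply: mulr_ge0; [exact: ltW|].
    have dlt : d i < c by rewrite real_ltNge ?h.
    rewrite subr0 mul1r !mulrA; apply: ler_wpM2r => //.
    apply: (@le_trans _ _ (t * c)); first by apply: ler_wpM2l; [exact: ltW | exact: ltW].
    rewrite mulrC ler_pM2l //; rewrite lerBrDl -lerBrDr.
    exact: ltW.
  have X : t * \sum_i (1 - ((c <= d i)%R)%:R) * d i * r i <= c * t ^+ 2.
    rewrite mulr_sumr; apply: le_trans (ler_sum _ (fun i _ => key i)) _.
    by rewrite -mulr_sumr ler_wpM2l // ltW.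
  rewrite split -(ler_pM2l tp') mulrBr.
  apply: (@le_trans _ _ (t * (1 - t ^+ 2) - c * t ^+ 2)); last first.
    by rewrite [X in _ <= X]mulrBr; apply: lerB => //; apply: ler_wpM2l => //; apply: ltW.
  by rewrite le_eqVlt; apply/orP; left; apply/eqP; rewrite /c; ring.
Qed.


Section H.
Variable C : numClosedFieldType.
Local Notation "M ^H" := (adjmx M) (at level 8, format "M ^H").

Lemma adjmxE m n (M : 'M[C]_(m,n)) : adjmx M = map_mx Num.conj (M^T).
Proof. by rewrite /adjmx map_trmx. Qed.

Lemma adjmxM m n p (A : 'M[C]_(m,n)) (B : 'M[C]_(n,p)) : (A *m B)^H = B^H *m A^H.
Proof. by rewrite !adjmxE trmx_mul map_mxM. Qed.

Lemma adjmxK m n (A : 'M[C]_(m,n)) : (A^H)^H = A.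
Proof. by apply/matrixP=> i j; rewrite !adjmxE !mxE conjCK. Qed.

Lemma adjmxD m n (A B : 'M[C]_(m,n)) : (A + B)^H = A^H + B^H.
Proof. by apply/matrixP=> i j; rewrite !adjmxE !mxE rmorphD. Qed.

Lemma adjmxN m n (A : 'M[C]_(m,n)) : (- A)^H = - A^H.
Proof. by apply/matrixP=> i j; rewrite !adjmxE !mxE rmorphN. Qed.

Lemma adjmxB m n (A B : 'M[C]_(m,n)) : (A - B)^H = A^H - B^H.
Proof. by rewrite adjmxD adjmxN. Qed.

Lemma adjmxZ m n a (A : 'M[C]_(m,n)) : (a *: A)^H = Num.conj a *: A^H.
Proof. by apply/matrixP=> i j; rewrite !adjmxE !mxE rmorphM. Qed.

Lemma adjmx1 n : (1%:M : 'M[C]_n)^H = 1%:M.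
Proof. by apply/matrixP=> i j; rewrite !adjmxE !mxE eq_sym rmorphMn rmorph1. Qed.

Lemma adjmx_diag n (d : 'rV[C]_n) : (forall i, d 0 i \is Num.real) ->
  (diag_mx d)^H = diag_mx d.
Proof.
move=> dr; apply/matrixP=> i j; rewrite !adjmxE !mxE eq_sym.
by case: eqP => [->|_]; rewrite ?mulr1n ?mulr0n ?rmorph0 // conj_Creal.
Qed.

Lemma diag_mul n (a b : 'rV[C]_n) :
  diag_mx a *m diag_mx b = diag_mx (\row_i (a 0 i * b 0 i)).
Proof.
apply/matrixP=> i j; rewrite mul_diag_mx !mxE.
by case: (i == j) => /=; rewrite ?mulr1n ?mulr0n ?mulr0.
Qed.

Lemma nrm_ge0 m (x : 'M[C]_(1,m)) : 0 <= (x *m x^H) 0 0.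
Proof.
rewrite !mxE; apply: sumr_ge0 => i _; rewrite !adjmxE !mxE; exact: mul_conjC_ge0.
Qed.

Lemma quad_diag m (x : 'M[C]_(1,m)) (e : 'rV[C]_m) : (forall i, 0 <= e 0 i) ->
  0 <= (x *m diag_mx e *m x^H) 0 0.
Proof.
move=> e0; rewrite mul_mx_diag !mxE; apply: sumr_ge0 => i _; rewrite !adjmxE !mxE.
by rewrite mulrAC; apply: mulr_ge0 => //; exact: mul_conjC_ge0.
Qed.

Lemma quad_proj m (x : 'M[C]_(1,m)) P : P^H = P -> P *m P = P ->
  0 <= (x *m P *m x^H) 0 0.
Proof.
move=> Ph PP; have -> : x *m P *m x^H = (x *m P) *m (x *m P)^H.
  by rewrite adjmxM Ph -mulmxA -[in RHS]mulmxA (mulmxA P) PP.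
exact: nrm_ge0.
Qed.

Lemma diag_entry m (U M : 'M[C]_m) i :
  (U *m M *m U^H) i i = (row i U *m M *m (row i U)^H) 0 0.
Proof.
rewrite !mxE; apply: eq_bigr => k _; rewrite !adjmxE !mxE; congr (_ * _).
by apply: eq_bigr => l _; rewrite !mxE.
Qed.

Lemma tr_diag_r m (R : 'M[C]_m) d : \tr (R *m diag_mx d) = \sum_i R i i * d 0 i.
Proof. by rewrite mul_mx_diag /mxtrace; apply: eq_bigr => i _; rewrite mxE. Qed.

End H.

Section H2.
Variable C : numClosedFieldType.
Local Notation "M ^H" := (adjmx M) (at level 8, format "M ^H").

Lemma quad_lin m (x : 'M[C]_(1,m)) (y : 'M[C]_(m,1)) (M N : 'M[C]_m) a :
  (x *m (M - a *: N) *m y) 0 0 = (x *m M *m y) 0 0 - a * (x *m N *m y) 0 0.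
Proof.
rewrite mulmxBr mulmxBl -scalemxAr -scalemxAl.
by rewrite [LHS]mxE [X in _ + X]mxE [X in - X]mxE.
Qed.

Lemma proj_uniq m (P Q : 'M[C]_m) : P^H = P -> P *m P = P -> Q^H = Q -> Q *m Q = Q ->
  (P == Q)%MS -> P = Q.
Proof.
move=> Ph Pi Qh Qi /andP [/submxP [X hX] /submxP [Y hY]].
have PQ : P *m Q = P by rewrite hX -mulmxA Qi.
have QP : Q *m P = Q by rewrite hY -mulmxA Pi.
by rewrite -PQ -Ph -Qh -adjmxM QP.
Qed.

Lemma diag_lin m (a b : 'rV[C]_m) k :
  diag_mx a - k *: diag_mx b = diag_mx (\row_i (a 0 i - k * b 0 i)).
Proof.
apply/matrixP => i j; rewrite !mxE; case: eqP => [->|_] /=.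
  by rewrite !mulr1n.
by rewrite !mulr0n mulr0 subr0.
Qed.

Lemma quad_lin2 m (x : 'M[C]_(1,m)) (y : 'M[C]_(m,1)) (M N : 'M[C]_m) a :
  (x *m (a *: M - N) *m y) 0 0 = a * (x *m M *m y) 0 0 - (x *m N *m y) 0 0.
Proof.
rewrite mulmxBr mulmxBl -scalemxAr -scalemxAl.
by rewrite [LHS]mxE [X in X + _]mxE [X in _ + X]mxE.
Qed.

Lemma diag_lin2 m (a b : 'rV[C]_m) k :
  k *: diag_mx b - diag_mx a = diag_mx (\row_i (k * b 0 i - a 0 i)).
Proof.
apply/matrixP => i j; rewrite !mxE; case: eqP => [->|_] /=.
  by rewrite !mulr1n.
by rewrite !mulr0n mulr0 subr0.
Qed.

Lemma trmx_entries m (R : 'M[C]_m) : \tr R = \sum_i R i i.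
Proof. by []. Qed.
End H2.

Local Notation "M ^H" := (adjmx M) (at level 8, format "M ^H").
Section Sp.
Variable C : numClosedFieldType.
Variable n : nat.
Variable K : 'M[C]_n.
Hypothesis Kh : K^H = K.
Lemma spec : exists U (d : 'rV[C]_n), [/\ K = U^H *m diag_mx d *m U, U *m U^H = 1%:M,
   U^H *m U = 1%:M & forall i, d 0 i \is Num.real].
Proof.
have Kherm : K \is hermsymmx.
  by rewrite is_hermitianmxE expr0 scale1r -adjmxE Kh.
have /orthomx_spectralP KE := hermitian_normalmx Kherm.
have Uu := spectral_unitarymx K.
have dr := hermitian_spectral_diag_real Kherm.
exists (spectralmx K), (spectral_diag K); split.
- by rewrite {1}KE invmx_unitary // adjmxE.
- by rewrite adjmxE; apply/unitarymxP.
- by rewrite adjmxE -invmx_unitary // mulVmx // spectral_unit.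
- by move=> i; move/mxOverP: dr; apply.
Qed.
End Sp.

Section S.
Variable C : numClosedFieldType.
Variable n : nat.
Variables PA PB U : 'M[C]_n.
Variables d : 'rV[C]_n.
Variable t : C.
Hypothesis PAh : PA^H = PA.
Hypothesis PAi : PA *m PA = PA.
Hypothesis PBh : PB^H = PB.
Hypothesis PBi : PB *m PB = PB.
Hypothesis t0 : 0 <= t.
Hypothesis t1 : t < 1.
Let K := PA *m PB *m PA.
Hypothesis KE : K = U^H *m diag_mx d *m U.
Hypothesis UU : U *m U^H = 1%:M.
Hypothesis UU' : U^H *m U = 1%:M.
Hypothesis dr : forall i, d 0 i \is Num.real.
Let c := 1 - t.
Let s := \row_i ((c <= d 0 i)%R%:R : C).
Let e := \row_i (s 0 i / d 0 i).
Let S := diag_mx s.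
Let E := diag_mx e.
Let D := diag_mx d.

Lemma c_gt0 : 0 < c. Proof. by rewrite subr_gt0. Qed.
Lemma c_real : c \is Num.real. Proof. exact/gtr0_real/c_gt0. Qed.

Lemma s_cases i : (s 0 i = 1 /\ c <= d 0 i) \/ (s 0 i = 0 /\ d 0 i < c).
Proof.
rewrite /s mxE; case h: (c <= d 0 i); [left | right]; split => //.
by rewrite real_ltNge ?h // c_real.
Qed.

Lemma dpos i : s 0 i = 1 -> 0 < d 0 i.
Proof.
case: (s_cases i) => [[_ h]|[-> _]].
  by move=> _; exact: lt_le_trans c_gt0 h.
by move=> /eqP; rewrite eq_sym oner_eq0.
Qed.

Lemma diag_eq (a b : 'rV[C]_n) : (forall i, a 0 i = b 0 i) -> diag_mx a = diag_mx b.
Proof. by move=> h; congr diag_mx; apply/rowP => i; rewrite h. Qed.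

Lemma s_real i : s 0 i \is Num.real.
Proof. by case: (s_cases i) => [[-> _]|[-> _]]. Qed.
Lemma e_real i : e 0 i \is Num.real.
Proof. by rewrite /e mxE; apply: realM; [apply: s_real | rewrite realV]. Qed.

Lemma Sh : S^H = S. Proof. exact/adjmx_diag/s_real. Qed.
Lemma Eh : E^H = E. Proof. exact/adjmx_diag/e_real. Qed.
Lemma Dh : D^H = D. Proof. exact/adjmx_diag. Qed.

Lemma SS : S *m S = S.
Proof. rewrite /S diag_mul; apply: diag_eq => i; rewrite !mxE.
by case: (c <= d 0 i); rewrite /= ?mulr1 ?mulr0. Qed.

Lemma SD_comm : S *m D = D *m S.
Proof. by rewrite /S /D !diag_mul; apply: diag_eq => i; rewrite !mxE mulrC. Qed.

Lemma EDS : E *m D *m S = S.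
Proof.
rewrite /S /D /E !diag_mul; apply: diag_eq => i; rewrite !mxE.
case h: (c <= d 0 i); rewrite /= ?mulr0 ?mul0r //.
by rewrite mul1r mulr1 mulVf // gt_eqF // (lt_le_trans c_gt0 h).
Qed.

Lemma UK : U *m K = D *m U.
Proof. by rewrite KE !mulmxA UU mul1mx. Qed.

Lemma SUPA : S *m U *m PA = S *m U.
Proof.
have h : S *m U = (E *m S *m U *m PA *m PB) *m PA.
  rewrite -{1}EDS -(mulmxA E D S) -SD_comm mulmxA -(mulmxA _ D U) -UK /K.
  by rewrite !mulmxA.
by rewrite {1}h -mulmxA PAi -h.
Qed.


Lemma PAUS : PA *m U^H *m S = U^H *m S.
Proof.
have := congr1 (@adjmx C n n) SUPA; rewrite !adjmxM PAh Sh.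
by rewrite !mulmxA.
Qed.

Section X.
Variable m : nat.
Variable X : 'M[C]_(m, n).
Lemma SUPAx : X *m S *m U *m PA = X *m S *m U.
Proof. by rewrite -!mulmxA (mulmxA S) SUPA. Qed.
Lemma PAUSx : X *m PA *m U^H *m S = X *m U^H *m S.
Proof. by rewrite -!mulmxA (mulmxA PA) PAUS. Qed.
Lemma UKx : X *m U *m PA *m PB *m PA = X *m D *m U.
Proof. by rewrite -!mulmxA (mulmxA PA PB PA) -/K UK. Qed.
Lemma UUhx : X *m U *m U^H = X.
Proof. by rewrite -mulmxA UU mulmx1. Qed.
Lemma UhUx : X *m U^H *m U = X.
Proof. by rewrite -mulmxA UU' mulmx1. Qed.
Lemma PBPBx : X *m PB *m PB = X *m PB.
Proof. by rewrite -mulmxA PBi. Qed.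
Lemma PAPAx : X *m PA *m PA = X *m PA.
Proof. by rewrite -mulmxA PAi. Qed.
Lemma SSx : X *m S *m S = X *m S.
Proof. by rewrite -mulmxA SS. Qed.
End X.

Lemma A_sub : (S *m U <= PA)%MS.
Proof. by rewrite -SUPA submxMl. Qed.

Lemma partA (v : 'rV[C]_n) : (v <= S *m U)%MS -> c * nrm2 v <= nrm2 (v *m PB).
Proof.
case/submxP => w ->; rewrite /nrm2 !adjmxM PBh Sh !mulmxA.
rewrite UUhx SSx PBPBx -SUPAx -PAUSx UKx UUhx.
have -> : w *m S *m D *m S *m w^H = w *m (S *m D *m S) *m w^H by rewrite !mulmxA.
have -> : w *m S *m w^H = w *m S *m w^H by [].
rewrite -subr_ge0 -quad_lin /S /D diag_mul diag_mul diag_lin; apply: quad_diag => i.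
rewrite !mxE; case h: (c <= d 0 i); rewrite /= ?mulr1 ?mul1r ?mulr0 ?subr0 //.
by rewrite subr_ge0.
Qed.

Lemma SUPBUSx m (X : 'M[C]_(m,n)) : X *m S *m U *m PB *m U^H *m S = X *m S *m D *m S.
Proof. by rewrite -SUPAx -PAUSx UKx UUhx. Qed.

Lemma EM : E *m (S *m D *m S) *m E = E.
Proof.
rewrite /S /D /E !diag_mul; apply: diag_eq => i; rewrite !mxE.
case h: (c <= d 0 i); rewrite /= ?mulr0 ?mul0r ?mulr1 ?mul1r //.
have dn : d 0 i != 0 by rewrite gt_eqF // (lt_le_trans c_gt0 h).
by rewrite mulVf // mul1r.
Qed.

Lemma SM : S *m D *m S *m E = S.
Proof.
rewrite /S /D /E !diag_mul; apply: diag_eq => i; rewrite !mxE.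
case h: (c <= d 0 i); rewrite /= ?mulr0 ?mul0r ?mulr1 ?mul1r //.
have dn : d 0 i != 0 by rewrite gt_eqF // (lt_le_trans c_gt0 h).
by rewrite mulfV.
Qed.

Lemma partB PB0 : is_orth_proj PB0 (S *m U *m PB) ->
  loewner_le PB0 ((1 - t)^-1 *: (PB *m PA *m PB)).
Proof.
move=> [PB0h PB0i PB0W].
set W := S *m U *m PB.
have WWh : W *m W^H = S *m D *m S.
  rewrite /W !adjmxM PBh Sh !mulmxA PBPBx -[LHS]mul1mx !mulmxA SUPBUSx.
  by rewrite mul1mx.
have WE : W = S *m U *m PB by [].
clearbody W.
set Q := W^H *m E *m W.
have Qh : Q^H = Q.
  by rewrite /Q (adjmxM (W^H *m E) W) (adjmxM (W^H) E) adjmxK Eh mulmxA.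
have QQ : Q *m Q = Q.
  rewrite /Q !mulmxA -(mulmxA (W^H *m E) W (W^H)) WWh.
  by rewrite -(mulmxA (W^H) E (S *m D *m S)) -(mulmxA (W^H) (E *m _) E) EM.
have WQ : W *m Q = W.
  rewrite /Q !mulmxA WWh SM WE !mulmxA -[S *m S]mul1mx !mulmxA.
  by rewrite SSx mul1mx.
have QW : (Q == W)%MS.
  by apply/andP; split; [apply: submxMl | rewrite -{1}WQ submxMl].
have -> : PB0 = Q.
  apply: proj_uniq => //. move/eqmxP: PB0W => h1; move/eqmxP: QW => h2. rewrite WE in h2; apply/eqmxP; exact: eqmx_trans h1 (eqmx_sym h2).
split.
  rewrite /Defs.hermitian adjmxB adjmxZ Qh !adjmxM PBh PAh mulmxA conj_Creal //.
  by rewrite realV c_real.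
move=> v; rewrite quad_lin2 subr_ge0.
set a := v *m W^H.
have e1 : v *m Q *m v^H = a *m E *m a^H.
  by rewrite /a /Q adjmxM adjmxK !mulmxA.
set P := U^H *m S *m U.
have Ph : P^H = P by rewrite /P !adjmxM adjmxK Sh mulmxA.
have PP : P *m P = P by rewrite /P !mulmxA UUhx SSx.
have PAP : PA *m P = P.
  by rewrite /P -[PA *m _]mul1mx !mulmxA PAUSx mul1mx.
have PPA : P *m PA = P by rewrite /P SUPAx.
have step1 : (a *m E *m a^H) 0 0 <= c^-1 * (a *m S *m a^H) 0 0.
  rewrite -subr_ge0 -quad_lin2 /S /E diag_lin2; apply: quad_diag => i.
  rewrite !mxE; case h: (c <= d 0 i); rewrite /= ?mulr0 ?mul0r ?mulr1 ?mul1r ?subrr //.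
  have dp : 0 < d 0 i by rewrite (lt_le_trans c_gt0 h).
  by rewrite subr_ge0 lef_pV2 ?posrE // c_gt0.
have step2 : a *m S *m a^H = v *m PB *m P *m (v *m PB)^H.
  by rewrite /a WE /P !adjmxM !adjmxK !PBh !Sh !mulmxA !SSx.
have step3 : (v *m PB *m P *m (v *m PB)^H) 0 0 <= (v *m PB *m PA *m (v *m PB)^H) 0 0.
  rewrite -subr_ge0.
  have -> : (v *m PB *m PA *m (v *m PB)^H) 0 0 - (v *m PB *m P *m (v *m PB)^H) 0 0
     = ((v *m PB) *m (PA - 1 *: P) *m (v *m PB)^H) 0 0 by rewrite quad_lin mul1r.
  apply: quad_proj; first by rewrite scale1r adjmxB PAh Ph.
  by rewrite scale1r mulmxBl !mulmxBr PAi PAP PPA PP subrr subr0.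
have step4 : v *m PB *m PA *m (v *m PB)^H = v *m (PB *m PA *m PB) *m v^H.
  by rewrite adjmxM PBh !mulmxA.
rewrite e1 -step4; apply: (le_trans step1); apply: ler_wpM2l.
  by rewrite invr_ge0 ltW // c_gt0.
by rewrite step2.
Qed.

Lemma WWh0 : (S *m U *m PB) *m (S *m U *m PB)^H = S *m D *m S.
Proof. by rewrite !adjmxM PBh Sh !mulmxA PBPBx -[LHS]mul1mx !mulmxA SUPBUSx mul1mx. Qed.

Lemma PB0Q PB0 : is_orth_proj PB0 (S *m U *m PB) ->
  PB0 = (S *m U *m PB)^H *m E *m (S *m U *m PB).
Proof.
move=> [PB0h PB0i PB0W].
have WWh := WWh0.
move: WWh PB0W; set W := S *m U *m PB => WWh PB0W.
have WE : W = S *m U *m PB by [].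
clearbody W.
set Q := W^H *m E *m W.
have Qh : Q^H = Q.
  by rewrite /Q (adjmxM (W^H *m E) W) (adjmxM (W^H) E) adjmxK Eh mulmxA.
have QQ : Q *m Q = Q.
  rewrite /Q !mulmxA -(mulmxA (W^H *m E) W (W^H)) WWh.
  by rewrite -(mulmxA (W^H) E (S *m D *m S)) -(mulmxA (W^H) (E *m _) E) EM.
have WQ : W *m Q = W.
  rewrite /Q !mulmxA WWh SM WE !mulmxA -[S *m S]mul1mx !mulmxA.
  by rewrite SSx mul1mx.
have QW : (Q == W)%MS.
  by apply/andP; split; [apply: submxMl | rewrite -{1}WQ submxMl].
apply: proj_uniq => //. move/eqmxP: PB0W => h1; move/eqmxP: QW => h2.
apply/eqmxP; exact: eqmx_trans h1 (eqmx_sym h2).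
Qed.

Lemma partC rho : psd rho -> \tr rho <= 1 -> (rho <= PA)%MS ->
  1 - t ^+ 2 <= \tr (rho *m PB) ->
  S *m U != 0 /\ forall PB0, is_orth_proj PB0 (S *m U *m PB) ->
     1 - 2 * t <= \tr (rho *m PB0).
Proof.
move=> [rhoh rhop] tr1 /submxP [X hX] trPB.
have rhoPA : rho *m PA = rho by rewrite hX -mulmxA PAi.
have PArho : PA *m rho = rho.
  by have := congr1 (@adjmx C n n) rhoPA; rewrite adjmxM PAh rhoh.
set r := fun i => (U *m rho *m U^H) i i.
have r0 i : 0 <= r i by rewrite /r diag_entry; apply: rhop.
have trR : \tr rho = \sum_i r i.
  rewrite -trmx_entries mxtrace_mulC mulmxA.
  by rewrite -[U^H *m U *m rho]mul1mx !mulmxA UhUx mul1mx.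
have trK : \tr (rho *m PB) = \sum_i r i * d 0 i.
  rewrite -{1}PArho -mulmxA mxtrace_mulC -{1}rhoPA.
  have -> : rho *m PA *m PB *m PA = rho *m K by rewrite /K !mulmxA.
  rewrite KE !mulmxA mxtrace_mulC !mulmxA tr_diag_r.
  by [].
have d1 i : d 0 i <= 1.
  have -> : d 0 i = (U *m K *m U^H) i i.
    by rewrite UK UUhx /D mxE eqxx mulr1n.
  have one : (U *m 1%:M *m U^H) i i = 1 by rewrite mulmx1 UU mxE eqxx.
  rewrite -[X in _ <= X]one.
  rewrite !diag_entry -subr_ge0 -[X in _ - X]mul1r -quad_lin.
  have -> : 1%:M - 1 *: K = (1%:M - PA) + PA *m (1%:M - PB) *m PA.
    rewrite scale1r /K mulmxBr mulmxBl mulmx1 PAi addrA subrK.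
    by [].
  rewrite mulmxDr mulmxDl [X in 0 <= X]mxE; apply: addr_ge0.
    apply: quad_proj; first by rewrite adjmxB adjmx1 PAh.
    by rewrite mulmxBl !mulmxBr mul1mx mulmx1 PAi mul1mx subrr subr0.
  have -> : row i U *m (PA *m (1%:M - PB) *m PA) *m (row i U)^H =
     (row i U *m PA) *m (1%:M - PB) *m (row i U *m PA)^H.
    by rewrite (adjmxM (row i U) PA) PAh !mulmxA.
  apply: quad_proj; first by rewrite adjmxB adjmx1 PBh.
  by rewrite mulmxBl !mulmxBr mul1mx mulmx1 PBi mul1mx subrr subr0.
have tr1' : \sum_i r i <= 1 by rewrite -trR.
have trPB' : 1 - t ^+ 2 <= \sum_i r i * d 0 i by rewrite -trK.
have key := scalar_ineq t0 t1 r0 d1 (fun i => dr i) tr1' trPB'.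
have Wrho : S *m U *m PB *m rho = S *m D *m U *m rho.
  rewrite -[in LHS]PArho !mulmxA -[LHS]mul1mx !mulmxA -SUPAx UKx.
  by rewrite !mul1mx.
have rhoWh : rho *m (S *m U *m PB)^H = rho *m U^H *m D *m S.
  have := congr1 (@adjmx C n n) Wrho.
  by rewrite !adjmxM rhoh Dh Sh !mulmxA.
have DSESD : D *m S *m E *m S *m D = diag_mx (\row_i (s 0 i * d 0 i)).
  rewrite /S /D /E !diag_mul; apply: diag_eq => i; rewrite !mxE.
  case h: (c <= d 0 i); rewrite /= ?mulr0 ?mul0r ?mulr1 ?mul1r //.
  have dn : d 0 i != 0 by rewrite gt_eqF // (lt_le_trans c_gt0 h).
  by rewrite mulfV // mul1r.
have trQ PB0 : is_orth_proj PB0 (S *m U *m PB) ->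
    \tr (rho *m PB0) = \sum_i r i * (s 0 i * d 0 i).
  move/PB0Q ->.
  have -> : rho *m ((S *m U *m PB)^H *m E *m (S *m U *m PB)) =
     (rho *m U^H *m D *m S *m E) *m (S *m U *m PB) by rewrite !mulmxA rhoWh.
  rewrite mxtrace_mulC.
  have -> : S *m U *m PB *m (rho *m U^H *m D *m S *m E) =
     (S *m U *m PB *m rho) *m U^H *m D *m S *m E by rewrite !mulmxA.
  rewrite Wrho.
  have -> : S *m D *m U *m rho *m U^H *m D *m S *m E =
     (S *m D) *m ((U *m rho *m U^H) *m D *m S *m E) by rewrite !mulmxA.
  rewrite mxtrace_mulC.
  have -> : U *m rho *m U^H *m D *m S *m E *m (S *m D) =
     (U *m rho *m U^H) *m (D *m S *m E *m S *m D) by rewrite !mulmxA.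
  by rewrite DSESD tr_diag_r; apply: eq_bigr => i _; congr (_ * _); rewrite mxE.
have key' : 1 - t <= \sum_i r i * (s 0 i * d 0 i).
  by move: key; congr (_ <= _); apply: eq_bigr => i _; rewrite /s mxE.
split.
  apply/negP => /eqP SU0.
  have S0 : S = 0 by rewrite -[S]mulmx1 -UU mulmxA SU0 mul0mx.
  rewrite big1 in key'.
    by rewrite subr_le0 in key'; move: (lt_le_trans t1 key'); rewrite ltxx.
  move=> i _; have := congr1 (fun M : 'M[C]_n => M i i) S0.
  by rewrite /S !mxE eqxx mulr1n => ->; rewrite mul0r mulr0.
move=> PB0 hPB0; rewrite trQ //; apply: le_trans key'.
by rewrite lerD2l lerN2 mulr2n mulrDl mul1r lerDr.
Qed.

End S.


End Helpers.
Import Helpers.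

Theorem lemma4 (C : numClosedFieldType) (n : nat)
    (A' B' PA' PB' : 'M[C]_n) (eps : C) :
  is_orth_proj PA' A' -> is_orth_proj PB' B' ->
  0 <= eps -> eps < 1 ->
  exists A : 'M[C]_n,
    (A <= A')%MS /\
    (* (a) *)
    (forall v : 'rV[C]_n, (v <= A)%MS ->
       (1 - sqrtC eps) * nrm2 v <= nrm2 (v *m PB')) /\
    (* (b)  B := span { Pi_{B'} v | v in A } = row space of A *m PB' *)
    (forall PB : 'M[C]_n, is_orth_proj PB (A *m PB') ->
       loewner_le PB ((1 - sqrtC eps)^-1 *: (PB' *m PA' *m PB'))) /\
    (* (c) *)
    (forall rho : 'M[C]_n,
       psd rho -> \tr rho <= 1 -> (rho <= A')%MS ->
       1 - eps <= \tr (rho *m PB') ->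
       A != 0 /\
       forall PB : 'M[C]_n, is_orth_proj PB (A *m PB') ->
         1 - 2 * sqrtC eps <= \tr (rho *m PB)).
Proof.
move=> [PAh PAi PAA] [PBh PBi PBB] e0 e1.
have t0 : 0 <= sqrtC eps by rewrite sqrtC_ge0.
have t1 : sqrtC eps < 1 by rewrite -sqrtC1 ltr_sqrtC // nnegrE.
have eE : eps = sqrtC eps ^+ 2 by rewrite sqrtCK.
have Kh : adjmx (PA' *m PB' *m PA') = PA' *m PB' *m PA'.
  by rewrite !adjmxM PAh PBh mulmxA.
have [U [d [KE UU UU' dr]]] := spec Kh.
move/andP: PAA => [PAA1 PAA2].
exists (diag_mx (\row_i (((1 - sqrtC eps <= d 0 i)%R)%:R : C)) *m U).
split.
  apply: submx_trans PAA1; exact: (A_sub PAi t1 KE UU).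
split.
  by move=> v hv; apply: (partA PAh PAi PBh PBi t1 KE UU dr).
split.
  by move=> PB hPB; apply: (partB PAh PAi PBh PBi t1 KE UU dr).
move=> rho hrho tr1 hA htr.
apply: (partC PAh PAi PBh PBi t0 t1 KE UU UU' dr hrho tr1).
  exact: submx_trans hA PAA2.
by rewrite -eE.
Qed.
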